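(* Assume $\alpha=\beta=1$ and let $(U,V,\Lambda)$ be the similarity profile, with $\lambda^*:=\|\Lambda/U\|_{L^\infty}$. Then for every $\tau\ge0$ and all measurable $\rho,\zeta:\mathbb R\to(0,\infty)$ for which $\mathcal I_\Lambda(\rho,\zeta)$ is finite, setting $\mathbf u=(\rho U,\zeta V)$, $$\mathcal I_\Lambda(\rho,\zeta)-e^\tau\mathcal D_{\mathrm{react}}(\rho,\zeta)\le\mu_0e^{-\tau}\mathcal E_{\mathrm B}(\mathbf u|\mathbf U)+K_0e^{-\tau},$$ where $\mu_0=\frac{(\lambda^* )^2e^{\lambda^*/k}}{2k}$ and $K_0=\frac{e^{\lambda^*/k}}{k}\int_{\mathbb R}\frac{\alpha^2\Lambda^2}{U}\mathrm dy$.
   Context: Fix $d_1,d_2,k>0$, real stoichiometric coefficients $\alpha,\beta\ge1$ and $A_-,A_+>0$. The similarity profile is a triple $(U,V,\Lambda)$ with $U,V\in\mathrm C^2(\mathbb R)$ positive, bounded and bounded away from $0$, $\Lambda:\mathbb R\to\mathbb R$, satisfying $d_1U''+\tfrac y2U'+\alpha\Lambda=0$, $d_2V''+\tfrac y2V'-\beta\Lambda=0$, $U^\alpha=V^\beta$ on $\mathbb R$, and $U(\pm\infty)=A_\pm^\beta$, $V(\pm\infty)=A_\pm^\alpha$; $\mathbf U=(U,V)$. $\lambda_{\mathrm B}(z)=z\log z-z+1$; $\mathcal E_{\mathrm B}(\mathbf u|\mathbf U)=\int_{\mathbb R}\big(\lambda_{\mathrm B}(\rho)U+\lambda_{\mathrm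 B}(\zeta)V\big)\mathrm dy$ with $\rho=u/U$, $\zeta=v/V$. $\Gamma(a,b)=(a-b)(\log a-\log b)$ for $a,b>0$, $\Gamma(0,0)=0$, $\Gamma(0,c)=\Gamma(c,0)=\infty$ for $c>0$. Reactive dissipation $\mathcal D_{\mathrm{react}}(\rho,\zeta)=\int_{\mathbb R}kU^\alpha\,\Gamma(\rho^\alpha,\zeta^\beta)\,\mathrm dy$. Mixed term $\mathcal I_\Lambda(\rho,\zeta)=\int_{\mathbb R}\big((1-\rho)\alpha-(1-\zeta)\beta\big)\Lambda\,\mathrm dy$. $\|\cdot\|_{L^\infty}$ is the supremum of the absolute value. *)

(* Defs.v *)
From HB Require Import structures.
From mathcomp Require Import all_boot all_order all_algebra.
From mathcomp Require Import all_classical all_reals all_analysis.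
Set Implicit Arguments. Unset Strict Implicit. Unset Printing Implicit Defensive.
Import Order.TTheory GRing.Theory Num.Theory.
Import numFieldNormedType.Exports.
Local Open Scope classical_set_scope.
Local Open Scope ring_scope.

Section Defs.
Variable R : realType.

Definition C2 (f : R -> R) : Prop :=
  (forall x, derivable f x 1) /\ (forall x, derivable (derive1 f) x 1) /\
  continuous (derive1 (derive1 f)).

Definition pos_bdd_away (f : R -> R) : Prop :=
  (exists c : R, 0 < c /\ forall y, c <= f y) /\ (exists M : R, forall y, f y <= M).

Definition similarity_profile (d1 d2 alpha beta Am Ap : R) (U V Lam : R -> R) : Prop :=
  C2 U /\ C2 V /\ pos_bdd_away U /\ pos_bdd_away V /\
  (forall y, d1 * derive1 (derive1 U) y + y / 2 * derive1 U y + alpha * Lam y = 0) /\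
  (forall y, d2 * derive1 (derive1 V) y + y / 2 * derive1 V y - beta * Lam y = 0) /\
  (forall y, U y `^ alpha = V y `^ beta) /\
  U x @[x --> -oo] --> Am `^ beta /\ U x @[x --> +oo] --> Ap `^ beta /\
  V x @[x --> -oo] --> Am `^ alpha /\ V x @[x --> +oo] --> Ap `^ alpha.

Definition lambdaB (z : R) : R := z * ln z - z + 1.

(* Gamma(a,b) = (a-b)(log a - log b), used only for a,b > 0 *)
Definition GammaL (a b : R) : R := (a - b) * (ln a - ln b).

Local Notation leb := (@lebesgue_measure R).

Definition EB (U V u v : R -> R) : \bar R :=
  (\int[leb]_(y in setT) (lambdaB (u y / U y) * U y + lambdaB (v y / V y) * V y)%:E)%E.

Definition Dreact (k alpha beta : R) (U rho zeta : R -> R) : \bar R :=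
  (\int[leb]_(y in setT) (k * U y `^ alpha * GammaL (rho y `^ alpha) (zeta y `^ beta))%:E)%E.

Definition ILam_integrand (alpha beta : R) (Lam rho zeta : R -> R) (y : R) : R :=
  ((1 - rho y) * alpha - (1 - zeta y) * beta) * Lam y.

Definition ILam (alpha beta : R) (Lam rho zeta : R -> R) : \bar R :=
  (\int[leb]_(y in setT) (ILam_integrand alpha beta Lam rho zeta y)%:E)%E.

(* lambda^* = || Lambda / U ||_{L^infty}; Lambda/U is continuous, so the
   essential supremum equals the supremum *)
Definition lambda_star (U Lam : R -> R) : R :=
  sup [set `|Lam y / U y| | y in [set: R]].

End Defs.

(* Main.v *)
Require Import Defs.
From HB Require Import structures.
From mathcomp Require Import all_boot all_order all_algebra.
From mathcomp Require Import all_classical all_reals all_analysis.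
From mathcomp Require Import measurable_realfun ring lra.
Import Order.TTheory GRing.Theory Num.Theory.
Import numFieldNormedType.Exports.
Local Open Scope classical_set_scope.
Local Open Scope ring_scope.

Lemma key (R : realType) (f g h l : R -> R) (s c1 c2 : R) :
  0 < s -> 0 <= c1 -> 0 <= c2 ->
  @measurable_fun _ _ (measurableTypeR R) R setT g -> @measurable_fun _ _ (measurableTypeR R) R setT h -> @measurable_fun _ _ (measurableTypeR R) R setT l ->
  (forall y, 0 <= g y) -> (forall y, 0 <= h y) -> (forall y, 0 <= l y) ->
  (@lebesgue_measure R).-integrable [set: R] (fun y => (f y)%:E) ->
  (forall y, f y <= s * g y + c1 * h y + c2 * l y) ->
  (\int[@lebesgue_measure R]_(y in [set: R]) (f y)%:E
     - s%:E * \int[@lebesgue_measure R]_(y in [set: R]) (g y)%:E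
   <= c1%:E * \int[@lebesgue_measure R]_(y in [set: R]) (h y)%:E
      + c2%:E * \int[@lebesgue_measure R]_(y in [set: R]) (l y)%:E)%E.
Proof.
move=> s0' c10 c20 mg mh ml g0 h0 l0 fi fH.
have s0 := ltW s0'.
set mu := @lebesgue_measure R.
have mf := measurable_int mu fi.
have mgE : @measurable_fun _ _ (measurableTypeR R) (\bar R) setT (EFin \o g) by exact/measurable_EFinP.
have mhE : @measurable_fun _ _ (measurableTypeR R) (\bar R) setT (EFin \o h) by exact/measurable_EFinP.
have mlE : @measurable_fun _ _ (measurableTypeR R) (\bar R) setT (EFin \o l) by exact/measurable_EFinP.
have H1 : (\int[mu]_(y in [set: R]) (f y)%:E <=
    \int[mu]_(y in [set: R]) ((fun y => (f y)%:E)^\+ y))%E.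
  rewrite [X in (X <= _)%E]integralE leeBlDr; last exact: integrable_neg_fin_num.
  by rewrite leeDl// integral_ge0// => y _; exact: funeneg_ge0.
have H2 : (\int[mu]_(y in [set: R]) ((fun y => (f y)%:E)^\+ y) <=
    \int[mu]_(y in [set: R]) ((s%:E * (g y)%:E + c1%:E * (h y)%:E) + c2%:E * (l y)%:E))%E.
  apply: (@ge0_le_integral _ (measurableTypeR R) R mu setT measurableT).
  - by move=> y _; exact: funepos_ge0.
  - exact: measurable_funepos.
  - apply: emeasurable_funD; last exact: measurable_funeM.
    by apply: emeasurable_funD; exact: measurable_funeM.
  - move=> y _; rewrite funeposE -!EFinM -!EFinD.
    rewrite ge_max !lee_fin (fH y) /=.
    by rewrite !addr_ge0 // mulr_ge0.
have E : (\int[mu]_(y in [set: R]) ((s%:E * (g y)%:E + c1%:E * (h y)%:E) + c2%:E * (l y)%:E) =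
   s%:E * \int[mu]_(y in [set: R]) (g y)%:E + c1%:E * \int[mu]_(y in [set: R]) (h y)%:E
   + c2%:E * \int[mu]_(y in [set: R]) (l y)%:E)%E.
  rewrite ge0_integralD //; last 4 first.
  - by move=> y _; rewrite adde_ge0// mule_ge0// lee_fin.
  - by apply: emeasurable_funD; exact: measurable_funeM.
  - by move=> y _; rewrite mule_ge0// lee_fin.
  - exact: measurable_funeM.
  rewrite ge0_integralD //; last 4 first.
  - by move=> y _; rewrite mule_ge0// lee_fin.
  - exact: measurable_funeM.
  - by move=> y _; rewrite mule_ge0// lee_fin.
  - exact: measurable_funeM.
  by rewrite !ge0_integralZl// => y _; rewrite lee_fin.
rewrite E in H2; have H := le_trans H1 H2.
have fin : (\int[mu]_(y in [set: R]) (f y)%:E)%E \is a fin_num by exact: integrable_fin_num.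
have Ig0 : (0 <= \int[mu]_(y in [set: R]) (g y)%:E)%E.
  by apply: integral_ge0 => y _; rewrite lee_fin.
set IG := (\int[mu]_(y in [set: R]) (g y)%:E)%E in H Ig0 *.
set IF := (\int[mu]_(y in [set: R]) (f y)%:E)%E in H fin *.
move: H Ig0; case: IG => [r| |] H Ig0 //=.
- by rewrite EFinN leeBlDl// EFinM addeA.
- rewrite gt0_muley ?lte_fin//.
  by clear H; move: fin; case: IF => [r _| |] //=; rewrite leNye.
Qed.

Section Pt.
Variable R : realType.

Lemma ln_le_sub1 {x : R} : 0 < x -> ln x <= x - 1.
Proof.
move=> x0; have := @le_ln1Dx R (x - 1).
have -> : 1 + (x - 1) = x by ring.
by apply; lra.
Qed.

Lemma ln_ge_1inv {x : R} : 0 < x -> x - 1 <= x * ln x.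
Proof.
move=> x0; have x0i : 0 < x^-1 by rewrite invr_gt0.
have := ln_le_sub1 x0i.
rewrite lnV ?posrE // => h.
have : x * (- ln x) <= x * (x^-1 - 1) by rewrite ler_pM2l.
rewrite mulrBr mulfV ?gt_eqF //; lra.
Qed.

Lemma gamma_lb (a b : R) : 0 < a -> 0 < b ->
  (a - b) ^+ 2 <= (a + b) * ((a - b) * (ln a - ln b)).
Proof.
move=> a0 b0.
have h1 : a * (ln a - ln b) >= a - b.
  have := ln_le_sub1 (divr_gt0 b0 a0 : 0 < b / a).
  rewrite lnM ?posrE ?invr_gt0 // lnV ?posrE // => h.
  have : a * (ln b - ln a) <= a * (b / a - 1) by rewrite ler_pM2l.
  have -> : a * (b / a - 1) = b - a by field; rewrite gt_eqF.
  lra.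
have h2 : b * (ln a - ln b) <= a - b.
  have := ln_le_sub1 (divr_gt0 a0 b0 : 0 < a / b).
  rewrite lnM ?posrE ?invr_gt0 // lnV ?posrE // => h.
  have : b * (ln a - ln b) <= b * (a / b - 1) by rewrite ler_pM2l.
  have -> : b * (a / b - 1) = a - b by field; rewrite gt_eqF.
  lra.
set d := ln a - ln b in h1 h2 *.
have [ab|ab] := lerP b a.
  have d0 : 0 <= d.
    rewrite -(pmulr_rge0 _ a0); lra.
  nra.
have d0 : d <= 0.
  rewrite -(pmulr_rle0 _ b0); lra.
nra.
Qed.

Lemma lamB_ge0 {a : R} : 0 < a -> 0 <= lambdaB a.
Proof. move=> a0; have := ln_ge_1inv a0; rewrite /lambdaB; lra. Qed.

Lemma lamB_lin {a : R} : 0 < a -> a <= 2 * lambdaB a + 2.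
Proof.
move=> a0; set t := Num.sqrt a.
have t0 : 0 < t by rewrite sqrtr_gt0.
have at2 : a = t * t by rewrite -expr2 sqr_sqrtr // ltW.
have lt : ln a = ln t + ln t by rewrite at2 lnM ?posrE.
have h := ln_ge_1inv t0.
have h2 : t * (t - 1) <= t * (t * ln t) by rewrite ler_pM2l.
have h3 : 0 <= (t - 2) ^+ 2 by apply: sqr_ge0.
rewrite /lambdaB lt at2.
have -> : t * t * (ln t + ln t) = 2 * (t * (t * ln t)) by ring.
nra.
Qed.

Lemma pointwise (s k u L E a b Lam : R) : 0 < s -> 0 < k -> 0 < u ->
  0 < a -> 0 < b -> 1 <= E -> `|Lam / u| <= L ->
  (b - a) * Lam <= s * (k * u * ((a - b) * (ln a - ln b)))
   + (L ^+ 2 * E / (2 * k) * s^-1) * (lambdaB a * u + lambdaB b * u)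
   + (E / k * s^-1) * (Lam ^+ 2 / u).
Proof.
move=> s0 k0 u0 a0 b0 E1 hL.
set l := Lam / u.
have Le : Lam = l * u by rewrite /l divfK // gt_eqF.
rewrite Le.
set m := a + b; set c := s * k; set G := (a - b) * (ln a - ln b).
have m0 : 0 < m by rewrite /m addr_gt0.
have c0 : 0 < c by rewrite /c mulr_gt0.
have hG : (a - b) ^+ 2 <= m * G by exact: gamma_lb.
have A : (b - a) * (l * u) <= c * u * (a - b) ^+ 2 / m + u * m * l ^+ 2 / (4 * c).
  rewrite -subr_ge0.
  have -> : c * u * (a - b) ^+ 2 / m + u * m * l ^+ 2 / (4 * c) - (b - a) * (l * u)
     = u / (m * c) * (c * (a - b) + m * l / 2) ^+ 2.
    by field; rewrite !gt_eqF.
  by rewrite mulr_ge0 ?sqr_ge0 // divr_ge0 ?ltW // mulr_gt0.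
have B : c * u * (a - b) ^+ 2 / m <= s * (k * u * G).
  have -> : s * (k * u * G) = (c * u / m) * (m * G) by rewrite /c; field; rewrite gt_eqF.
  by rewrite mulrAC ler_wpM2l // divr_ge0 ?mulr_ge0 // ltW.
have la := lamB_ge0 a0; have lb := lamB_ge0 b0.
have ma : m <= 2 * lambdaB a + 2 * lambdaB b + 4.
  by have := lamB_lin a0; have := lamB_lin b0; rewrite /m; lra.
have l2 : l ^+ 2 <= L ^+ 2.
  move: hL; rewrite ler_norml => /andP[h1 h2].
  have : 0 <= (L - l) * (L + l) by rewrite mulr_ge0 // ?subr_ge0 // -lerBlDl sub0r.
  rewrite !expr2; lra.
have C0 : m * l ^+ 2 / 4 <= E * (L ^+ 2 * (lambdaB a + lambdaB b) / 2 + l ^+ 2).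
  have l20 : 0 <= l ^+ 2 by apply: sqr_ge0.
  have h1 : m * l ^+ 2 <= (2 * lambdaB a + 2 * lambdaB b + 4) * l ^+ 2 by rewrite ler_wpM2r.
  have h2 : (lambdaB a + lambdaB b) * l ^+ 2 <= (lambdaB a + lambdaB b) * L ^+ 2
    by rewrite ler_wpM2l // addr_ge0.
  have h3 : 0 <= L ^+ 2 * (lambdaB a + lambdaB b) / 2 + l ^+ 2.
    by rewrite addr_ge0 // divr_ge0 // mulr_ge0 // ?sqr_ge0 // addr_ge0.
  have h4 : 1 * (L ^+ 2 * (lambdaB a + lambdaB b) / 2 + l ^+ 2) <=
     E * (L ^+ 2 * (lambdaB a + lambdaB b) / 2 + l ^+ 2) by rewrite ler_wpM2r.
  lra.
have C : u * m * l ^+ 2 / (4 * c) <= (L ^+ 2 * E / (2 * k) * s^-1) * (lambdaB a * u + lambdaB b * u)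
   + (E / k * s^-1) * ((l * u) ^+ 2 / u).
  have -> : u * m * l ^+ 2 / (4 * c) = (u / c) * (m * l ^+ 2 / 4) by field; rewrite !gt_eqF.
  have -> : (L ^+ 2 * E / (2 * k) * s^-1) * (lambdaB a * u + lambdaB b * u)
     + (E / k * s^-1) * ((l * u) ^+ 2 / u)
     = (u / c) * (E * (L ^+ 2 * (lambdaB a + lambdaB b) / 2 + l ^+ 2)).
    by rewrite /c; field; rewrite !gt_eqF.
  by rewrite ler_wpM2l // divr_ge0 // ltW.
lra.
Qed.

End Pt.

Lemma ode_sol (R : realType) (D : R) (P Q : R -> R) : 0 < D ->
  (forall x : R, is_derive x (1:R) P (Q x)) ->
  (forall y, D * Q y + y * P y = 0) ->
  forall y, P y = P 0 * expR (- (y ^+ 2 / (2 * D))).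
Proof.
move=> D0 dP ode.
set w := (2 * D)^-1.
pose h : R -> R := w \*: ((id : R -> R) * id).
pose g : R -> R := P * (expR \o h).
have hE y : h y = y ^+ 2 / (2 * D).
  by rewrite /h; change (w * (y * y) = y ^+ 2 / (2 * D)); rewrite expr2 mulrC.
have dg : forall x, is_derive x (1:R) g 0.
  move=> x.
  have dh : is_derive x (1:R) h (w *: (x *: 1 + x *: 1)).
    by apply: is_deriveZ; apply: is_deriveM.
  have de : is_derive x (1:R) (expR \o h) (expR (h x) * (w *: (x *: 1 + x *: 1))).
    exact: is_derive1_comp.
  apply: (is_derive_eq (is_deriveM (dP x) de)).
  change (P x * (expR (h x) * (w * (x * 1 + x * 1))) + expR (h x) * Q x = 0).
  have qE : Q x = - (x * P x) / D.
    have o := ode x.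
    apply: (@mulfI _ D); first by rewrite gt_eqF.
    rewrite [RHS]mulrC divfK ?gt_eqF //; lra.
  by rewrite qE /w; field; rewrite gt_eqF.
move=> y; rewrite /w -/(_ / _).
have := is_derive_0_is_cst y 0 dg.
rewrite /g; change (P y * expR (h y) = P 0 * expR (h 0) -> P y = P 0 * expR (- (y ^+ 2 / (2 * D)))).
rewrite !hE expr0n /= mul0r expR0 mulr1 => <-.
by rewrite -mulrA -expRD addrN expR0 mulr1.
Qed.

Lemma gauss_bound (R : realType) (D y : R) : 0 < D ->
  `|y| * expR (- (y ^+ 2 / (2 * D))) <= 1 + 2 * D.
Proof.
move=> D0; set z := y ^+ 2 / (2 * D).
have ez := expR_ge1Dx z.
have z0 : 0 <= z by rewrite /z divr_ge0 ?sqr_ge0 // mulr_ge0 // ltW.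
have yy : `|y| <= 1 + y ^+ 2.
  have : 0 <= (`|y| - 1) ^+ 2 by apply: sqr_ge0.
  have n2 : `|y| ^+ 2 = y ^+ 2 by rewrite real_normK ?num_real.
  have n0 : 0 <= `|y| by [].
  nra.
have yz : y ^+ 2 = 2 * D * z by rewrite /z mulrC divfK // mulf_neq0 // gt_eqF.
have h : `|y| <= (1 + 2 * D) * expR z.
  apply: (le_trans yy); apply: (le_trans _ (ler_wpM2l _ ez)); last by rewrite addr_ge0 // mulr_ge0 // ltW.
  rewrite yz; nra.
rewrite expRN -ler_pdivlMr ?expR_gt0 //.
rewrite invrK; first exact: h.
by rewrite invr_gt0 expR_gt0.
Qed.

Theorem mainTheorem11 (R : realType) (d1 d2 k alpha beta Am Ap : R)
  (U V Lam : R -> R) :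
  0 < d1 -> 0 < d2 -> 0 < k -> 0 < Am -> 0 < Ap ->
  alpha = 1 -> beta = 1 ->
  similarity_profile d1 d2 alpha beta Am Ap U V Lam ->
  forall (tau : R) (rho zeta : R -> R),
    0 <= tau ->
    measurable_fun [set: R] rho -> measurable_fun [set: R] zeta ->
    (forall y, 0 < rho y) -> (forall y, 0 < zeta y) ->
    (@lebesgue_measure R).-integrable [set: R]
      (fun y => (ILam_integrand alpha beta Lam rho zeta y)%:E) ->
    let ls := lambda_star U Lam in
    let mu0 := ls ^+ 2 * expR (ls / k) / (2 * k) in
    let K0 := ((expR (ls / k) / k)%:E *
               \int[@lebesgue_measure R]_(y in [set: R])
                  (alpha ^+ 2 * Lam y ^+ 2 / U y)%:E)%E in
    (ILam alpha beta Lam rho zeta - (expR tau)%:E * Dreact k alpha beta U rho zeta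
      <= (mu0 * expR (- tau))%:E * EB U V (fun y => (rho y * U y)%R) (fun y => (zeta y * V y)%R)
         + K0 * (expR (- tau))%:E)%E.
Proof.
Proof.
move=> d10 d20 k0 Am0 Ap0 -> -> hp tau rho zeta tau0 mrho mzeta rho0 zeta0 fi.
set ls := lambda_star U Lam; cbv zeta.
case: hp => [[dU [dP cQ]] [_ [[[cU [cU0 cUle]] _] [[[cV [cV0 cVle]] _] [e1 [e2 [eUV _]]]]]]].
have U0 y : 0 < U y by apply: lt_le_trans (cUle y).
have V0 y : 0 < V y by apply: lt_le_trans (cVle y).
have VU : V = U.
  by apply/funext => y; move: (eUV y); rewrite !powRr1 // ltW.
subst V.
set P := derive1 U in dP cQ e1 e2 *.
set Q := derive1 P in cQ e1 e2 *.
set D := d1 + d2.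
have D0 : 0 < D by rewrite addr_gt0.
have e1' y : d1 * Q y + y / 2 * P y + Lam y = 0 by have := e1 y; rewrite mul1r.
have e2' y : d2 * Q y + y / 2 * P y - Lam y = 0 by have := e2 y; rewrite mul1r.
have ode y : D * Q y + y * P y = 0.
  have -> : D * Q y + y * P y = (d1 * Q y + y / 2 * P y + Lam y) + (d2 * Q y + y / 2 * P y - Lam y).
    by rewrite /D; field.
  by rewrite e1' e2' addr0.
have dP' x : is_derive x (1:R) P (Q x).
  by rewrite /Q derive1E; apply: derivableP; exact: dP.
have sol := @ode_sol R D P Q D0 dP' ode.
set c := d1 / D - 1 / 2.
have LamF y : Lam y = c * (y * P y).
  have qE : Q y = - (y * P y) / D.
    have o := ode y.
    apply: (@mulfI _ D); first by rewrite gt_eqF.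
    rewrite [RHS]mulrC divfK ?gt_eqF //; lra.
  have -> : Lam y = - (d1 * Q y + y / 2 * P y) by have := e1' y; lra.
  by rewrite qE /c; field; rewrite gt_eqF.
set Bd := `|c| * (`|P 0| * (1 + 2 * D)).
have Bd0 : 0 <= Bd by rewrite mulr_ge0 // mulr_ge0 // addr_ge0 // mulr_ge0 // ltW.
have bnd y : `|Lam y| <= Bd.
  rewrite LamF normrM ler_wpM2l // sol mulrCA normrM ler_wpM2l // normrM.
  rewrite [`|expR _|]ger0_norm ?expR_ge0 //.
  exact: gauss_bound.
have hub : has_ubound [set `|Lam y / U y| | y in [set: R]].
  exists (Bd / cU) => _ [y _ <-].
  rewrite normrM normfV (gtr0_norm (U0 y)) ler_pdivrMr //.
  apply: (le_trans (bnd y)).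
  by rewrite mulrAC ler_pdivlMr // ler_wpM2l.
have hls y : `|Lam y / U y| <= ls.
  by apply: ub_le_sup hub _ _; exists y.
have ls0 : 0 <= ls by apply: le_trans (hls 0).
have contU : continuous U.
  by move=> x; apply/differentiable_continuous/derivable1_diffP/dU.
have contP : continuous P.
  by move=> x; apply/differentiable_continuous/derivable1_diffP/dP.
have LamC : Lam = fun y => - (d1 * Q y + y / 2 * P y).
  by apply/funext => y; have := e1' y; lra.
have contLam : continuous Lam.
  rewrite LamC => x; apply: cvgN; apply: cvgD.
    by apply: cvgM; [exact: cvg_cst | exact: cQ].
  apply: cvgM; last exact: contP.
  by apply: cvgM; [exact: cvg_id | exact: cvg_cst].
have contUV : continuous (fun y => (U y)^-1).
  by move=> x; apply: continuousV; [rewrite gt_eqF | exact: contU].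
rewrite /ILam /Dreact /EB muleAC -EFinM.
have mg : measurable_fun [set: R]
    (fun y => k * U y `^ 1 * GammaL (rho y `^ 1) (zeta y `^ 1)).
  have -> : (fun y => k * U y `^ 1 * GammaL (rho y `^ 1) (zeta y `^ 1)) =
      (fun y => k * U y * ((rho y - zeta y) * (ln (rho y) - ln (zeta y)))).
    by apply/funext => y; rewrite !powRr1 ?ltW //.
  have mU := continuous_measurable_fun contU.
  apply: measurable_funM; first by apply: measurable_funM => //; exact: measurable_cst.
  apply: measurable_funM; first exact: measurable_funB.
  by apply: measurable_funB; apply: measurableT_comp => //; exact: measurable_ln.
have mh : measurable_fun [set: R]
    (fun y => lambdaB (rho y * U y / U y) * U y + lambdaB (zeta y * U y / U y) * U y).
  have -> : (fun y => lambdaB (rho y * U y / U y) * U y + lambdaB (zeta y * U y / U y) * U y)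
      = (fun y => lambdaB (rho y) * U y + lambdaB (zeta y) * U y).
    by apply/funext => y; rewrite !mulfK // gt_eqF.
  have mU := continuous_measurable_fun contU.
  have mlB : measurable_fun [set: R] (@lambdaB R).
    rewrite /lambdaB; apply: measurable_funD; last exact: measurable_cst.
    apply: measurable_funB => //.
    by apply: measurable_funM => //; exact: measurable_ln.
  by apply: measurable_funD; apply: measurable_funM => //; apply: measurableT_comp.
have ml : measurable_fun [set: R] (fun y => 1 ^+ 2 * Lam y ^+ 2 / U y).
  apply: measurable_funM; last exact: continuous_measurable_fun.
  apply: measurable_funM; first exact: measurable_cst.
  by apply: measurable_funX; exact: continuous_measurable_fun.
apply: key.
- exact: expR_gt0.
- by rewrite mulr_ge0 // ?expR_ge0 // divr_ge0 ?mulr_ge0 ?sqr_ge0 ?expR_ge0 // ltW.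
- by rewrite mulr_ge0 ?expR_ge0 // divr_ge0 ?expR_ge0 // ltW.
- exact: mg.
- exact: mh.
- exact: ml.
- move=> y; rewrite !powRr1 ?(ltW (U0 y)) ?(ltW (rho0 y)) ?(ltW (zeta0 y)) //; apply: mulr_ge0; first by rewrite mulr_ge0 // ltW.
  rewrite /GammaL; have [h|h] := lerP (zeta y) (rho y).
    by rewrite mulr_ge0 ?subr_ge0 // ler_ln ?posrE.
  by apply: mulr_le0; rewrite subr_le0 ?ler_ln ?posrE // ltW.
- move=> y; rewrite !mulfK ?gt_eqF //.
  by rewrite addr_ge0 // mulr_ge0 ?lamB_ge0 // ltW.
- move=> y; apply: mulr_ge0; last by rewrite invr_ge0 ltW.
  by rewrite mulr_ge0 ?sqr_ge0.
- exact: fi.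
- move=> y; rewrite /ILam_integrand /GammaL !powRr1 ?(ltW (U0 y)) ?(ltW (rho0 y)) ?(ltW (zeta0 y)) // !mulfK ?gt_eqF // expr1n mul1r expRN.
  have E1 : 1 <= expR (ls / k).
    by apply: le_trans (expR_ge1Dx _); rewrite lerDl divr_ge0 // ltW.
  have := @pointwise R _ _ _ _ _ _ _ _ (expR_gt0 tau) k0 (U0 y) (rho0 y) (zeta0 y) E1 (hls y).
  have -> : ((1 - rho y) * 1 - (1 - zeta y) * 1) * Lam y = (zeta y - rho y) * Lam y by ring.
  by [].
Qed.
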